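(* Assume $d(\eta,\cdot)$ attains its minimum over $\mathcal G$ at $g^*$ (equivalently, by the results on the BF dual, the BF prediction for $b=b^*$, $\epsilon=\vec 0_m$, which is then $g^*$). Then for every $g^{ds}$ in the closure $\mathcal G_{ds}$ of $\mathcal G^\circ_{ds}$ in $\Delta_k^n$, $d(\eta,g^* )\le d(\eta,g^{ds})$.
   Context: Standard setup. Let $n\ge1$, $k\ge2$, $p\ge1$ be integers and $m=p+k$. There are $n$ data points $x_1,\dots,x_n$ and $p$ rules $h^{(1)},\dots,h^{(p)}$, each a map from $\{x_1,\dots,x_n\}$ to $\{1,\dots,k\}\cup\{?\}$, where ''?'' means abstain. Let $n_j\ge1$ be the number of indices $i$ with $h^{(j)}(x_i)\neq ?$. $\Delta_k$ denotes the probability simplex in $\mathbb{R}^k$; an element $z\in\Delta_k^n\subset\mathbb{R}^{nk}$ is written $z=(z_1,\dots,z_n)$ with $z_i=(z_{i1},\dots,z_{ik})\in\Delta_k$. For $j\le p$ let $h^{(j)}\in\{0,1\}^{nk}$ also denote the vector with $h^{(j)}_{i\ell}=1$ iff $h^{(j)}(x_i)=\ell$; for $\ell\le k$ let $\vec e^{\,n}_\ell\in\{0,1\}^{nk}$ have entries $(\vec e^{\,n}_\ell)_{i\ell'}=\mathbf 1(\ell'=\ell)$. The matrix $A\in\mathbb{R}^{m\times nk}$ has rows $a^{(j)}=h^{(j)}/n_j$ for $1\le j\le p$ and $a^{(p+\ell)}=\vec e^{\,n}_\ell/n$ for $1\le\ell\le k$. For $\theta\in\mathbb{R}^m$ put $a^{(\theta)}=A^\top\theta\in\mathbb{R}^{nk}$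 (entries $a^{(\theta)}_{i\ell}$) and define $g^{(\theta)}\in\Delta_k^n$ by $g^{(\theta)}_{i\ell}=\exp(a^{(\theta)}_{i\ell})/\sum_{\ell'=1}^k\exp(a^{(\theta)}_{i\ell'})$; let $\mathcal G=\{g^{(\theta)}:\theta\in\mathbb{R}^m\}$. A fixed ''true labeling'' $\eta\in\Delta_k^n$ is given and $b^*:=A\eta\in\mathbb{R}^m$. For $\mu,\nu\in\Delta_k^n$, $d(\mu,\nu)=\sum_{i=1}^n\mathrm{KL}(\mu_i\|\nu_i)=\sum_{i,\ell}\mu_{i\ell}\log(\mu_{i\ell}/\nu_{i\ell})$, with $0\log(0/x)=0$. One-coin Dawid–Skene (OCDS) prediction: for class frequencies $w\in\Delta_k$ and rule accuracies $b\in(0,1)^p$, $g^{ds}(w,b)\in\Delta_k^n$ is defined by $g^{ds}(w,b)_{i\ell}=\widehat g_{i\ell}/\sum_{\ell'}\widehat g_{i\ell'}$ where $\widehat g_{i\ell}=w_\ell\prod_{j:\,h^{(j)}(x_i)=\ell}b_j\prod_{j:\,h^{(j)}(x_i)\notin\{\ell,?\}}\frac{1-b_j}{k-1}$. $\mathcal G^\circ_{ds}=\{g^{ds}(w,b):\ w\in\Delta_k,\ 0<w_\ell<1\ \forall\ell,\ b\in(0,1)^p\}$. *)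

(* Defs.v *)
From HB Require Import structures.
From mathcomp Require Import all_boot all_order all_algebra.
From mathcomp Require Import all_classical all_reals all_analysis.
Set Implicit Arguments. Unset Strict Implicit. Unset Printing Implicit Defensive.
Import Order.TTheory GRing.Theory Num.Theory.
Import numFieldNormedType.Exports.
Local Open Scope classical_set_scope.
Local Open Scope ring_scope.

Section Defs.
Variables (R : realType) (n k p : nat).
(* rules: h j i = None means abstain, Some l means label l *)
Variable h : 'I_p -> 'I_n -> option 'I_k.

Definition nj (j : 'I_p) : nat := #|[set i : 'I_n | h j i != None]|.

(* rows of A, viewed as n x k matrices (entry (i,l) = index (i,l) of R^{nk}) *)
Definition arow (r : 'I_(p + k)) : 'M[R]_(n, k) :=
  match fintype.split r with
  | inl j => \matrix_(i < n, l < k) ((h j i == Some l)%:R / (nj j)%:R)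
  | inr l0 => \matrix_(i < n, l < k) ((l == l0)%:R / n%:R)
  end.

Definition atheta (theta : 'I_(p + k) -> R) : 'M[R]_(n, k) :=
  \sum_(r < p + k) theta r *: arow r.

Definition gtheta (theta : 'I_(p + k) -> R) : 'M[R]_(n, k) :=
  \matrix_(i < n, l < k)
    (expR (atheta theta i l) / \sum_(l' < k) expR (atheta theta i l')).

Definition Gset : set 'M[R]_(n, k) := range gtheta.

Definition simplex_n : set 'M[R]_(n, k) :=
  [set z | (forall i l, 0 <= z i l) /\ (forall i, \sum_(l < k) z i l = 1)].

Definition klterm (a b : R) : \bar R :=
  if a == 0 then 0%E else if b == 0 then +oo%E else (a * ln (a / b))%:E.

Definition dKL (mu nu : 'M[R]_(n, k)) : \bar R :=
  (\sum_(i < n) \sum_(l < k) klterm (mu i l) (nu i l))%E.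

Definition ghat (w : 'I_k -> R) (b : 'I_p -> R) (i : 'I_n) (l : 'I_k) : R :=
  w l * (\prod_(j < p | h j i == Some l) b j)
      * (\prod_(j < p | (h j i != Some l) && (h j i != None))
           ((1 - b j) / (k%:R - 1))).

Definition gds (w : 'I_k -> R) (b : 'I_p -> R) : 'M[R]_(n, k) :=
  \matrix_(i < n, l < k) (ghat w b i l / \sum_(l' < k) ghat w b i l').

Definition Gds_open : set 'M[R]_(n, k) :=
  [set g | exists (w : 'I_k -> R) (b : 'I_p -> R),
     [/\ \sum_(l < k) w l = 1, (forall l, 0 < w l < 1),
         (forall j, 0 < b j < 1) & g = gds w b]].

End Defs.

(* Main.v *)
Require Import Defs.
From HB Require Import structures.
From mathcomp Require Import all_boot all_order all_algebra.
From mathcomp Require Import all_classical all_reals all_analysis.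
From mathcomp Require Import ring lra.
Import Order.TTheory GRing.Theory Num.Theory.
Import numFieldNormedType.Exports.
Local Open Scope classical_set_scope.
Local Open Scope ring_scope.

Set Implicit Arguments.
Unset Strict Implicit.
Section Helpers.
Variables (R : realType) (n k p : nat).
Variable h : 'I_p -> 'I_n -> option 'I_k.

Lemma atheta_lshift (theta : 'I_(p + k) -> R) i l :
  atheta h theta i l =
  \sum_(j < p) theta (lshift k j) * ((h j i == Some l)%:R / (nj h j)%:R)
  + \sum_(l0 < k) theta (rshift p l0) * ((l == l0)%:R / n%:R).
Proof.
rewrite /atheta summxE big_split_ord /=; congr (_ + _); apply: eq_bigr => j _;
  rewrite !mxE /arow.
- have -> : fintype.split (lshift k j) = inl j := unsplitK (inl _ j).
  by rewrite mxE.
- have -> : fintype.split (rshift p j) = inr j := unsplitK (inr _ j).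
  by rewrite mxE.
Qed.


Hypothesis hn : (1 <= n)%N.
Hypothesis hk : (2 <= k)%N.
Hypothesis hnj : forall j : 'I_p, (1 <= nj h j)%N.

Lemma gds_in_G (w : 'I_k -> R) (b : 'I_p -> R) :
  (forall l, 0 < w l < 1) -> (forall j, 0 < b j < 1) ->
  Gset h (gds h w b).
Proof.
move=> hw hb.
have k1 : 0 < k%:R - 1 :> R by rewrite subr_gt0 ltr1n.
pose c j := (1 - b j) / (k%:R - 1).
pose be j := b j * (k%:R - 1) / (1 - b j).
have b1 j : 0 < 1 - b j by rewrite subr_gt0; case/andP: (hb j).
have b0 j : 0 < b j by case/andP: (hb j).
have w0 l : 0 < w l by case/andP: (hw l).
have be0 j : 0 < be j by rewrite /be divr_gt0 // mulr_gt0.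
pose theta (r : 'I_(p + k)) : R :=
  match fintype.split r with
  | inl j => (nj h j)%:R * ln (be j)
  | inr l0 => n%:R * ln (w l0) end.
exists theta => //.
have hE i l : expR (atheta h theta i l) =
   (\prod_(j < p) (if h j i == Some l then be j else 1)) * w l.
  rewrite atheta_lshift expRD expR_sum; congr (_ * _).
    apply: eq_bigr => j _; rewrite /theta.
    have -> : fintype.split (lshift k j) = inl j := unsplitK (inl _ j).
    have nj0 : (nj h j)%:R != 0 :> R by rewrite pnatr_eq0 -lt0n hnj.
    rewrite mulrCA mulrAC mulfV // mul1r.
    by case: (h j i == Some l); rewrite ?mul1r ?lnK ?posrE ?mul0r ?expR0.
  rewrite (bigD1 l) //= big1 ?addr0.
    rewrite /theta.
    have -> : fintype.split (rshift p l) = inr l := unsplitK (inr _ l).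
    have n0 : n%:R != 0 :> R by rewrite pnatr_eq0 -lt0n.
    by rewrite eqxx mul1r mulrAC mulfV // mul1r lnK ?posrE.
  by move=> l0 /negbTE; rewrite eq_sym => ->; rewrite mul0r mulr0.
apply/matrixP => i l; rewrite !mxE.
pose C := \prod_(j < p) (if h j i != None then c j else 1).
have C0 : 0 < C.
  rewrite /C; apply: prodr_gt0 => j _; case: ifP => // _.
  by rewrite divr_gt0.
have hg l' : ghat h w b i l' = C * expR (atheta h theta i l').
  rewrite hE /ghat /C [RHS]mulrA [RHS]mulrC -big_split /=.
  rewrite (big_mkcond (fun j => h j i == Some l')) /=.
  rewrite (big_mkcond (fun j => (h j i != Some l') && (h j i != None))) /=.
  rewrite -mulrA -big_split /=; congr (_ * _); apply: eq_bigr => j _.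
  case: (h j i) => [l1|] //=; rewrite andbT.
  case: (Some l1 == Some l'); last by rewrite /c mul1r mulr1.
  rewrite mulr1 /c /be /=; field.
  by apply/andP; split; rewrite lt0r_neq0.
under [X in _ = _ / X]eq_bigr do rewrite hg.
rewrite hg -mulr_sumr.
have S0 : 0 < \sum_(l' < k) expR (atheta h theta i l').
  rewrite (bigD1 l) //= ltr_pwDl ?expR_gt0 //.
  by apply: sumr_ge0 => *; rewrite expR_ge0.
field; apply/andP; split; by rewrite lt0r_neq0.
Qed.


Lemma gtheta_pos (theta : 'I_(p + k) -> R) i l : 0 < gtheta h theta i l.
Proof.
rewrite mxE divr_gt0 ?expR_gt0 //.
have l0 : (0 < k)%N by apply: leq_trans hk.
rewrite (bigD1 (Ordinal l0)) //= ltr_pwDl ?expR_gt0 //.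
by apply: sumr_ge0 => *; rewrite expR_ge0.
Qed.

Definition Fr (eta x : 'M[R]_(n, k)) : R :=
  \sum_(i < n) \sum_(l < k)
     (if eta i l == 0 then 0 else eta i l * ln (eta i l / x i l)).

Lemma dKL_fin (eta x : 'M[R]_(n, k)) : (forall i l, eta i l != 0 -> x i l != 0) ->
  dKL eta x = (Fr eta x)%:E.
Proof.
move=> H; rewrite /dKL /Fr -sumEFin; apply: eq_bigr => i _.
rewrite -sumEFin; apply: eq_bigr => l _; rewrite /klterm.
by case: eqP => // /eqP e; rewrite (negbTE (H i l e)).
Qed.

Lemma klterm_ninfty (a b : R) : klterm a b != -oo%E.
Proof. by rewrite /klterm; case: ifP => //; case: ifP. Qed.

Lemma dKL_inf (eta x : 'M[R]_(n, k)) i l : eta i l != 0 -> x i l = 0 -> dKL eta x = +oo%E.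
Proof.
move=> e x0; apply/esum_eqyP.
  move=> i' _; rewrite esum_eqNy; apply/negP => /existsP [l' /andP [_ ]].
  by rewrite (negbTE (klterm_ninfty _ _)).
exists i; split => //.
apply/esum_eqyP; first by move=> *; exact: klterm_ninfty.
exists l; split => //.
by rewrite /klterm (negbTE e) x0 eqxx.
Qed.

Lemma cvg_sumr {T : Type} {F : set_system T} {FF : Filter F} (I : Type)
   (s : seq I) (f : I -> T -> R) (a : I -> R) :
  (forall i, f i x @[x --> F] --> a i) ->
  (\sum_(i <- s) f i x) @[x --> F] --> \sum_(i <- s) a i.
Proof.
move=> H; elim: s => [|i s IH].
  rewrite big_nil; under eq_fun do rewrite big_nil; exact: cvg_cst.
rewrite big_cons; under eq_fun do rewrite big_cons.
exact: cvgD.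
Qed.

Lemma Fr_cont (eta x : 'M[R]_(n, k)) : (forall i l, eta i l != 0 -> 0 < x i l) ->
  (forall i l, 0 <= eta i l) ->
  Fr eta y @[y --> x] --> Fr eta x.
Proof.
move=> Hx He; apply: (cvg_sumr (F := nbhs x)) => i; apply: (cvg_sumr (F := nbhs x)) => l.
case: eqP => [_|/eqP e]; first exact: cvg_cst.
have e0 : 0 < eta i l by rewrite lt0r e He.
have x0 := Hx i l e.
apply: cvgMr.
have := @continuous_cvg _ _ _ _ _ (fun y : 'M[R]_(n, k) => eta i l / y i l) (@ln R)
  (eta i l / x i l) (continuous_ln (divr_gt0 e0 x0)).
apply; apply: cvgMr; apply: cvgV; first by rewrite lt0r_neq0.
exact: coord_continuous.
Qed.

End Helpers.

Unset Implicit Arguments.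
Set Strict Implicit.

Theorem mainTheorem16 (R : realType) (n k p : nat)
  (hn : (1 <= n)%N) (hk : (2 <= k)%N) (hp : (1 <= p)%N)
  (h : 'I_p -> 'I_n -> option 'I_k)
  (hnj : forall j : 'I_p, (1 <= nj h j)%N)
  (eta : 'M[R]_(n, k)) (heta : simplex_n eta)
  (gstar : 'M[R]_(n, k)) (hgstar : Gset (R:=R) h gstar)
  (hmin : forall g, Gset (R:=R) h g -> (dKL eta gstar <= dKL eta g)%E)
  (g : 'M[R]_(n, k))
  (hg : (closure (Gds_open (R:=R) h) `&` simplex_n (R:=R) (n:=n) (k:=k)) g) :
  (dKL eta gstar <= dKL eta g)%E.
Proof.
case: hg => hcl [g0 _]; case: heta => [e0 _].
case: (boolP [forall i, forall l, (eta i l != 0) ==> (g i l != 0)]); last first.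
  rewrite negb_forall => /existsP [i]; rewrite negb_forall => /existsP [l].
  rewrite negb_imply negbK => /andP [e /eqP gz].
  by rewrite (dKL_inf e gz) leey.
move=> /forallP H.
have Hg : forall i l, eta i l != 0 -> g i l != 0.
  by move=> i l; move/forallP: (H i) => /(_ l) /implyP.
rewrite (dKL_fin Hg).
have cont : Fr eta y @[y --> g] --> Fr eta g.
  apply: Fr_cont => // i l e; rewrite lt0r g0 andbT; exact: Hg.
rewrite leNgt; apply/negP => lt.
have [z [z1 z2]] : exists z, Fr eta g < z /\ (z%:E <= dKL eta gstar)%E.
  move: lt; case: (dKL eta gstar) => [r||] //=.
  - by rewrite lte_fin => ?; exists r.
  - by move=> _; exists (Fr eta g + 1); rewrite ltrDl ltr01 leey.
have nb := @cvgr_lt _ _ (nbhs g) (nbhs_filter g) _ (Fr eta g) cont z z1.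
have [x [[w [b [_ hw hb ->]]] hx]] := hcl _ nb.
have Gx := gds_in_G hn hk hnj hw hb.
have := hmin _ Gx; move: hx.
case: Gx => theta _ <- hx.
rewrite [dKL eta (gtheta _ _)]dKL_fin; last by move=> i l _; apply: lt0r_neq0; exact: gtheta_pos.
move=> le.
have : (z%:E <= (Fr eta (gtheta h theta))%:E)%E by apply: le_trans z2 le.
by rewrite lee_fin leNgt hx.
Qed.
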